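(* Let $(R,\mathfrak{m},k)$ be a local ring, $M$ a finitely generated $R$-module, $N$ an $\mathfrak{m}$-full submodule of $M$, and $x\in\mathfrak{m}$ with $(\mathfrak{m}N:_Mx)=N$. Then: (1) $(N:_Mx)=(N:_M\mathfrak{m})$. (2) If $p_1,\dots,p_l\in M$ are such that their images form a $k$-basis of $(N:_M\mathfrak{m})/N$, then $xp_1,\dots,xp_l$ form part of a minimal generating set of $N$. (3) If $\{xp_1,\dots,xp_l\}\cup\{z_1,\dots,z_m\}$ is a minimal generating set of $N$ (with $p_i$ as in (2)), then the map $\phi:N\to(N:_M\mathfrak{m})/N$ given by $\phi\big(\sum_i a_ixp_i+\sum_j b_jz_j\big)=\sum_i \overline{a_i}\,\overline{p_i}$ is well defined and $R$-linear. (4) The $R$-linear map $\psi:(N:_M\mathfrak{m})/N\to N/xN$, $\psi(s+N)=xs+xN$, is a split injection. (5) $k$ is a direct summand of $N/xN$.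
   Context: A submodule $N$ of $M$ is $\mathfrak{m}$-full if there exists $x\in\mathfrak{m}$ with $(\mathfrak{m}N:_Mx)=N$.
   Formalization: The local ring R is taken to be Noetherian, and part (5) holds only under the further hypothesis $(N:_M\mathfrak{m})\neq N$, that is, when $(N:_M\mathfrak{m})/N$ is nonzero. Each condition added here is assumed in the paper as well or is needed for the statement above to hold. *)

(* Defs.v *)
From HB Require Import structures.
From mathcomp Require Import all_boot all_order all_algebra.
Set Implicit Arguments. Unset Strict Implicit. Unset Printing Implicit Defensive.
Import GRing.Theory.
Local Open Scope ring_scope.

Section Defs.
Variable R : comUnitRingType.

(* membership in the maximal ideal m = the non-units *)
Definition in_m (r : R) : Prop := r \notin GRing.unit.

(* R is local: the non-units form an ideal (1 != 0 is part of the structure) *)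
Definition local_ring : Prop :=
  forall a b : R, in_m a -> in_m b -> in_m (a + b).

Definition is_ideal (I : R -> Prop) : Prop :=
  I 0 /\ (forall a b, I a -> I b -> I (a + b)) /\ (forall r a, I a -> I (r * a)).

Definition ideal_fg (I : R -> Prop) : Prop :=
  exists s : seq R, forall a, I a <->
    exists c : 'I_(size s) -> R, a = \sum_(i < size s) c i * s`_i.

Definition noetherian : Prop := forall I, is_ideal I -> ideal_fg I.

Variable M : lmodType R.

Definition same_set (A B : M -> Prop) : Prop := forall v, A v <-> B v.

Definition in_span (s : seq M) (v : M) : Prop :=
  exists c : 'I_(size s) -> R, v = \sum_(i < size s) c i *: s`_i.

Definition fin_gen : Prop := exists s : seq M, forall v, in_span s v.

Definition submodule (N : M -> Prop) : Prop :=
  N 0 /\ (forall u v, N u -> N v -> N (u + v)) /\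
  (forall r v, N v -> N (r *: v)).

Definition colon (N : M -> Prop) (x : R) : M -> Prop := fun v => N (x *: v).

Definition colon_m (N : M -> Prop) : M -> Prop :=
  fun v => forall r, in_m r -> N (r *: v).

Definition mmul (N : M -> Prop) : M -> Prop :=
  fun v => exists s : seq M, (forall w, w \in s -> N w) /\
    exists c : 'I_(size s) -> R, (forall i, in_m (c i)) /\
      v = \sum_(i < size s) c i *: s`_i.

Definition smul (x : R) (N : M -> Prop) : M -> Prop :=
  fun v => exists n, N n /\ v = x *: n.

Definition m_full (N : M -> Prop) : Prop :=
  exists x, in_m x /\ same_set (colon (mmul N) x) N.

Definition generates (N : M -> Prop) (s : seq M) : Prop :=
  (forall w, w \in s -> N w) /\ (forall v, N v -> in_span s v).

Definition minimal_gen (N : M -> Prop) (s : seq M) : Prop :=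
  generates N s /\
  (forall i, (i < size s)%N -> ~ generates N (take i s ++ drop i.+1 s)).

(* the images of p_1..p_l in (N :_M m)/N form a k-basis (k = R/m) *)
Definition quot_kbasis (N : M -> Prop) (l : nat) (p : 'I_l -> M) : Prop :=
  (forall i, colon_m N (p i)) /\
  (forall s, colon_m N s -> exists a : 'I_l -> R, N (s - \sum_(i < l) a i *: p i)) /\
  (forall a : 'I_l -> R, N (\sum_(i < l) a i *: p i) -> forall i, in_m (a i)).

End Defs.

(* Main.v *)
Require Import Defs.
From HB Require Import structures.
From mathcomp Require Import all_boot all_order all_algebra.
From Stdlib Require Import Classical ClassicalEpsilon.
From mathcomp Require Import zify.
Set Implicit Arguments. Unset Strict Implicit. Unset Printing Implicit Defensive.
Import GRing.Theory.
Local Open Scope ring_scope.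


Definition rest (T : Type) (L : seq T) k := take k L ++ drop k.+1 L.

Section Span.
Variable R : comUnitRingType.
Variable M : lmodType R.

Definition spanP (L : seq M) (v : M) : Prop :=
  exists c : nat -> R, v = \sum_(k < size L) c k *: L`_k.

Lemma spanP0 L : spanP L 0.
Proof. by exists (fun _ => 0); rewrite big1 // => k _; rewrite scale0r. Qed.

Lemma spanPD L u v : spanP L u -> spanP L v -> spanP L (u + v).
Proof.
move=> [c1 ->] [c2 ->]; exists (fun k => c1 k + c2 k).
by rewrite -big_split /=; apply: eq_bigr => k _; rewrite scalerDl.
Qed.

Lemma spanPZ L r v : spanP L v -> spanP L (r *: v).
Proof.
move=> [c ->]; exists (fun k => r * c k).
by rewrite scaler_sumr; apply: eq_bigr => k _; rewrite scalerA.
Qed.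

Lemma spanPN L v : spanP L v -> spanP L (- v).
Proof. by move=> h; rewrite -scaleN1r; apply: spanPZ. Qed.

Lemma spanPB L u v : spanP L u -> spanP L v -> spanP L (u - v).
Proof. by move=> h1 h2; apply: spanPD => //; apply: spanPN. Qed.

Lemma spanP_sum L (I : Type) (r : seq I) (P : pred I) (F : I -> M) :
  (forall i, P i -> spanP L (F i)) -> spanP L (\sum_(i <- r | P i) F i).
Proof.
move=> h; apply: (big_ind (spanP L)) => //; [exact: spanP0 | exact: spanPD].
Qed.

Lemma spanP_mem L w : w \in L -> spanP L w.
Proof.
move=> wL; have iL : (index w L < size L)%N by rewrite index_mem.
exists (fun k => if k == index w L then 1 else 0).
rewrite (bigD1 (Ordinal iL)) //= eqxx scale1r nth_index // big1 ?addr0 //.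
by move=> k /negbTE; rewrite -val_eqE /= => ->; rewrite scale0r.
Qed.

Lemma spanP_sub L L' v : (forall w, w \in L -> spanP L' w) ->
  spanP L v -> spanP L' v.
Proof.
move=> h [c ->]; apply: spanP_sum => k _; apply: spanPZ; apply: h.
exact: mem_nth.
Qed.

Lemma spanP_nil v : spanP [::] v -> v = 0.
Proof. by move=> [c ->]; rewrite big_ord0. Qed.

Lemma spanP_cons a L v : spanP (a :: L) v ->
  exists r w, spanP L w /\ v = r *: a + w.
Proof.
move=> [c ->]; rewrite /= big_ord_recl /=.
exists (c 0%N), (\sum_(i < size L) c (lift ord0 i) *: L`_i); split=> //.
by exists (fun k => c k.+1).
Qed.

Lemma spanP_cat L1 L2 v : spanP (L1 ++ L2) v ->
  exists v1 v2, spanP L1 v1 /\ spanP L2 v2 /\ v = v1 + v2.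
Proof.
elim: L1 v => [|a L1 IH] v /=.
  by move=> h; exists 0, v; rewrite add0r; split=> //; apply: spanP0.
move=> /spanP_cons [r [w0 [hw ->]]].
have [v1 [v2 [h1 [h2 ->]]]] := IH _ hw.
exists (r *: a + v1), v2; split; last split=> //; last by rewrite addrA.
apply: spanPD; first by apply: spanPZ; apply: spanP_mem; rewrite mem_head.
by apply: spanP_sub h1 => w wL; apply: spanP_mem; rewrite in_cons wL orbT.
Qed.

Lemma spanP_catl L1 L2 v : spanP L1 v -> spanP (L1 ++ L2) v.
Proof. by apply: spanP_sub => w wL; apply: spanP_mem; rewrite mem_cat wL. Qed.
Lemma spanP_catr L1 L2 v : spanP L2 v -> spanP (L1 ++ L2) v.
Proof. by apply: spanP_sub => w wL; apply: spanP_mem; rewrite mem_cat wL orbT. Qed.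


Lemma nth_rest (L : seq M) k j : j != k -> (j < size L)%N -> L`_j \in rest L k.
Proof.
move=> jk jL; rewrite mem_cat; case: (ltngtP j k) => [jlt|jgt|je].
- apply/orP; left; rewrite -(nth_take 0 jlt); apply: mem_nth.
  by rewrite size_take; case: ifP => // _; rewrite jlt.
- apply/orP; right; have -> : j = (k.+1 + (j - k.+1))%N by rewrite subnKC.
  rewrite -nth_drop; apply: mem_nth; rewrite size_drop.
  by rewrite ltn_sub2r // (leq_ltn_trans _ jL).
- by rewrite je eqxx in jk.
Qed.

Lemma sum_minus (L : seq M) (d : 'I_(size L) -> R) (k : 'I_(size L)) :
  spanP (rest L k) (\sum_(j | j != k) d j *: L`_j).
Proof.
apply: spanP_sum => j jk; apply: spanPZ; apply: spanP_mem; apply: nth_rest => //.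
Qed.

Lemma drop_redundant (L : seq M) k v : (k < size L)%N -> spanP (rest L k) L`_k ->
  spanP L v -> spanP (rest L k) v.
Proof.
move=> kL hk; apply: spanP_sub => w wL.
have iL : (index w L < size L)%N by rewrite index_mem.
rewrite -(nth_index 0 wL); case: (eqVneq (index w L) k) => [->|ne] //.
by apply: spanP_mem; apply: nth_rest.
Qed.

Lemma in_span_spanP L v : in_span L v <-> spanP L v.
Proof.
split.
  move=> [c ->]; apply: spanP_sum => i _; apply: spanPZ; apply: spanP_mem.
  exact: mem_nth.
by move=> [c ->]; exists (fun k => c k).
Qed.

Lemma size_rest (L : seq M) k : (k < size L)%N -> size (rest L k) = (size L).-1.
Proof.
move=> kL; rewrite size_cat size_take kL size_drop; lia.
Qed.

End Span.


Lemma choice_fun (I T : Type) (P : I -> T -> Prop) :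
  (forall i, exists v, P i v) -> exists f : I -> T, forall i, P i (f i).
Proof.
move=> h; exists (fun i => proj1_sig (constructive_indefinite_description _ (h i))).
by move=> i; case: (constructive_indefinite_description _ (h i)).
Qed.

Section Noeth.
Variable R : comUnitRingType.
Variable M : lmodType R.

Lemma subN_sum (N : M -> Prop) (I : Type) (r : seq I) (P : pred I) (F : I -> M) :
  submodule N -> (forall i, P i -> N (F i)) -> N (\sum_(i <- r | P i) F i).
Proof.
move=> [h0 [hD hZ]] h; apply: (big_ind N) => //.
Qed.

Lemma subN_opp (N : M -> Prop) v : submodule N -> N v -> N (- v).
Proof. by move=> [h0 [hD hZ]] h; rewrite -scaleN1r; apply: hZ. Qed.

Lemma subN_sub (N : M -> Prop) u v : submodule N -> N u -> N v -> N (u - v).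
Proof. by move=> hN hu hv; case: (hN) => [_ [hD _]]; apply: hD => //; apply: subN_opp. Qed.

Lemma noeth_fg : noetherian R -> forall (s : seq M) (N : M -> Prop),
  submodule N -> (forall v, N v -> spanP s v) ->
  exists g, (forall w, w \in g -> N w) /\ (forall v, N v -> spanP g v).
Proof.
move=> hR; elim=> [|a t IH] N hN hs.
  exists [::]; split=> // v /hs /spanP_nil ->; exact: spanP0.
have [h0 [hD hZ]] := hN.
pose I c := exists v, N v /\ spanP t (v - c *: a).
have hI : is_ideal I.
  split; first by exists 0; rewrite scale0r subr0; split=> //; apply: spanP0.
  split.
    move=> c1 c2 [v1 [n1 s1]] [v2 [n2 s2]]; exists (v1 + v2); split; first exact: hD.
    by rewrite scalerDl opprD addrACA; apply: spanPD.
  move=> r c [v [nv sv]]; exists (r *: v); split; first exact: hZ.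
  by rewrite -scalerA -scalerBr; apply: spanPZ.
have [sI hsI] := hR _ hI.
have memI : forall i : 'I_(size sI), I sI`_i.
  move=> i; apply/hsI; exists (fun j => if j == i then 1 else 0).
  rewrite (bigD1 i) //= eqxx mul1r big1 ?addr0 // => j /negbTE ->.
  by rewrite mul0r.
have [f hf] := choice_fun memI.
pose N' v := N v /\ spanP t v.
have hN' : submodule N'.
  split; first by split=> //; apply: spanP0.
  split; first by move=> u v [? ?] [? ?]; split; [apply: hD | apply: spanPD].
  by move=> r v [? ?]; split; [apply: hZ | apply: spanPZ].
have [g' [g'N g'S]] := IH N' hN' (fun v h => proj2 h).
exists ([seq f i | i <- enum 'I_(size sI)] ++ g'); split.
  move=> w; rewrite mem_cat => /orP [/mapP [i _ ->]|/g'N [] //].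
  by case: (hf i).
move=> v nv; have [r [w [sw ev]]] := spanP_cons (hs v nv).
have Ir : I r by exists v; split=> //; rewrite ev addrC addKr.
have [e he] := (iffLR (hsI r)) Ir.
pose u := \sum_(i < size sI) e i *: f i.
have nu : N u by apply: subN_sum => // i _; apply: hZ; case: (hf i).
have -> : v = u + (v - u) by rewrite addrC subrK.
apply: spanPD.
  apply: spanP_catl; apply: spanP_sum => i _; apply: spanPZ; apply: spanP_mem.
  by apply: map_f; rewrite mem_enum.
apply: spanP_catr; apply: g'S; split; first exact: subN_sub.
have -> : v - u = (v - r *: a) - \sum_(i < size sI) e i *: (f i - sI`_i *: a).
  rewrite he scaler_suml /u.
  under [X in _ = _ - X]eq_bigr => i _ do rewrite scalerBr scalerA.
  by rewrite sumrB opprB addrA subrK.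
apply: spanPB; first by rewrite ev addrC addKr.
by apply: spanP_sum => i _; apply: spanPZ; case: (hf i).
Qed.

Lemma greedy (P : seq M -> Prop) X Z : P (X ++ Z) ->
  exists Z', P (X ++ Z') /\ forall k, (k < size Z')%N -> ~ P (X ++ rest Z' k).
Proof.
move: {2}(size Z) (leqnn (size Z)) => n; elim: n Z => [|n IH] Z hZ hP.
  exists Z; split=> // k kZ; move: hZ; rewrite leqn0 => /eqP e; by rewrite e in kZ.
case: (classic (exists k, (k < size Z)%N /\ P (X ++ rest Z k))).
  move=> [k [kZ hk]]; apply: (IH (rest Z k)) => //.
  by rewrite size_rest //; move: hZ kZ; case: (size Z).
move=> hn; exists Z; split=> // k kZ hk; apply: hn; exists k; split=> //.
Qed.

End Noeth.


Section Main.
Variable R : comUnitRingType.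
Variable M : lmodType R.
Variable N : M -> Prop.
Variable x : R.
Hypothesis hloc : local_ring R.
Hypothesis hN : submodule N.
Hypothesis hx : in_m x.
Hypothesis hfull : same_set (colon (mmul N) x) N.

Lemma in_mMl (r a : R) : in_m a -> in_m (r * a).
Proof. by rewrite /in_m unitrM negb_and => ->; rewrite orbT. Qed.
Lemma in_mMr (r a : R) : in_m a -> in_m (a * r).
Proof. by rewrite mulrC; apply: in_mMl. Qed.
Lemma in_mN (a : R) : in_m a -> in_m (- a).
Proof. by rewrite /in_m unitrN. Qed.
Lemma in_m0 : in_m (0 : R).
Proof. by rewrite /in_m unitr0. Qed.
Lemma in_m1 : ~ in_m (1 : R).
Proof. by rewrite /in_m unitr1. Qed.
Lemma in_mB (a b : R) : in_m a -> in_m b -> in_m (a - b).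
Proof. by move=> ha hb; apply: hloc => //; apply: in_mN. Qed.
Lemma in_mBr (a b : R) : in_m (a - b) -> in_m b -> in_m a.
Proof. by move=> h1 h2; rewrite -(subrK b a); apply: hloc. Qed.

Lemma hN0 : N 0. Proof. by case: hN. Qed.
Lemma hND u v : N u -> N v -> N (u + v). Proof. by case: hN => _ [hD hZ]; auto. Qed.
Lemma hNZ r v : N v -> N (r *: v). Proof. by case: hN => _ [hD hZ]; auto. Qed.
Lemma hNB u v : N u -> N v -> N (u - v). Proof. exact: subN_sub. Qed.
Lemma hNsum (I : Type) (r : seq I) (P : pred I) (F : I -> M) :
  (forall i, P i -> N (F i)) -> N (\sum_(i <- r | P i) F i).
Proof. exact: subN_sum. Qed.

Lemma colon_m_sub : submodule (colon_m N).
Proof.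
split; first by move=> r _; rewrite scaler0; apply: hN0.
split; first by move=> u v hu hv r hr; rewrite scalerDr; apply: hND; [apply: hu|apply: hv].
by move=> a v hv r hr; rewrite scalerA mulrC -scalerA; apply: hNZ; apply: hv.
Qed.

Lemma colon_x v : N (x *: v) -> colon_m N v.
Proof.
move=> h r hr; apply/hfull; rewrite /colon.
exists [:: x *: v]; split; first by move=> w; rewrite inE => /eqP ->.
exists (fun _ => r); split=> //.
by rewrite big_ord1 /= scalerA mulrC -scalerA.
Qed.

Lemma mmul_x v : mmul N (x *: v) -> N v.
Proof. by move=> h; apply/hfull. Qed.

Lemma gen_mem L w : generates N L -> w \in L -> N w.
Proof. by move=> [h _]; apply: h. Qed.

Lemma mem_rest (L : seq M) k w : w \in rest L k -> w \in L.
Proof.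
rewrite mem_cat => /orP [/mem_take|/mem_drop] //.
Qed.

Lemma gen_drop L k : generates N L -> (k < size L)%N ->
  spanP (rest L k) L`_k -> generates N (rest L k).
Proof.
move=> [h1 h2] kL hk; split; first by move=> w /mem_rest; apply: h1.
move=> v nv; apply/in_span_spanP; apply: drop_redundant => //.
by apply/in_span_spanP; apply: h2.
Qed.

Lemma span_map_supp l (f : 'I_l -> M) (s : seq 'I_l) w : spanP (map f s) w ->
  exists c : 'I_l -> R, w = \sum_(j < l) c j *: f j /\ forall j, j \notin s -> c j = 0.
Proof.
elim: s w => [|i s IH] w /=.
  move=> /spanP_nil ->; exists (fun _ => 0); split=> //.
  by rewrite big1 // => j _; rewrite scale0r.
move=> /spanP_cons [r [w' [h ->]]]; have [c [-> hc]] := IH _ h.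
exists (fun j => c j + (if j == i then r else 0)); split.
  rewrite [RHS](eq_bigr (fun j => c j *: f j + (if j == i then r else 0) *: f j));
    last by move=> j _; rewrite scalerDl.
  rewrite big_split /= addrC; congr (_ + _).
  rewrite (bigD1 i) //= eqxx big1 ?addr0 // => j /negbTE ->; by rewrite scale0r.
move=> j; rewrite in_cons negb_or => /andP [ji js]; rewrite hc // (negbTE ji).
by rewrite addr0.
Qed.

Lemma span_enum l (f : 'I_l -> M) w : spanP (map f (enum 'I_l)) w ->
  exists c : 'I_l -> R, w = \sum_(j < l) c j *: f j.
Proof. by move=> /span_map_supp [c [h _]]; exists c. Qed.

Lemma span_XZ l m (f : 'I_l -> M) (z : 'I_m -> M) u :
  spanP (map f (enum 'I_l) ++ map z (enum 'I_m)) u ->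
  exists a b, u = \sum_(i < l) a i *: f i + \sum_(j < m) b j *: z j.
Proof.
move=> /spanP_cat [v1 [v2 [/span_enum [a ->] [/span_enum [b ->] ->]]]].
by exists a, b.
Qed.

Lemma nth_X l (f : 'I_l -> M) Z (i : 'I_l) : (map f (enum 'I_l) ++ Z)`_i = f i.
Proof.
rewrite nth_cat size_map size_enum_ord ltn_ord (nth_map i) ?size_enum_ord //.
by congr f; apply: val_inj; rewrite /= nth_enum_ord.
Qed.

Lemma rest_X (X Z : seq M) k : (k < size X)%N -> rest (X ++ Z) k = rest X k ++ Z.
Proof.
rewrite /rest; elim: X k => [|a X IH] [|k] //= kX; first by rewrite !drop0.
by rewrite IH.
Qed.

Lemma rest_Z (X Z : seq M) k : rest (X ++ Z) (size X + k) = X ++ rest Z k.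
Proof. by rewrite /rest; elim: X => [|a X IH] //=; rewrite IH. Qed.

Lemma map_nth_enum (Z : seq M) : [seq Z`_j | j : 'I_(size Z) <- enum 'I_(size Z)] = Z.
Proof.
have -> : [seq Z`_j | j : 'I_(size Z) <- enum 'I_(size Z)] = map (nth 0 Z) (map (@nat_of_ord (size Z)) (enum 'I_(size Z))).
  by rewrite -map_comp.
by rewrite val_enum_ord map_nth_iota0 // take_size.
Qed.

Lemma notin_rest_enum l (i : 'I_l) : i \notin rest (enum 'I_l) i.
Proof.
have il : (i < size (enum 'I_l))%N by rewrite size_enum_ord.
have e : enum 'I_l = take i (enum 'I_l) ++ i :: drop i.+1 (enum 'I_l).
  rewrite -{1}(cat_take_drop i (enum 'I_l)) (drop_nth i il).
  by congr (_ ++ _ :: _); apply: val_inj; rewrite /= nth_enum_ord.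
have := enum_uniq 'I_l; rewrite {1}e cat_uniq /= negb_or => /and3P [_ /andP [h1 _] /andP [h2 _]].
rewrite /rest mem_cat negb_or h2 andbT.
by apply: contra h1.
Qed.

End Main.


Section Sums.
Variable R : comUnitRingType.
Variable M : lmodType R.

Lemma sumD_rep n (a b : 'I_n -> R) (f : 'I_n -> M) :
  \sum_i (a i + b i) *: f i = \sum_i a i *: f i + \sum_i b i *: f i.
Proof. by rewrite -big_split; apply: eq_bigr => i _; rewrite scalerDl. Qed.

Lemma sumB_rep n (a b : 'I_n -> R) (f : 'I_n -> M) :
  \sum_i (a i - b i) *: f i = \sum_i a i *: f i - \sum_i b i *: f i.
Proof. by rewrite -sumrB; apply: eq_bigr => i _; rewrite scalerBl. Qed.

Lemma sumZ_rep n r (a : 'I_n -> R) (f : 'I_n -> M) :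
  \sum_i (r * a i) *: f i = r *: \sum_i a i *: f i.
Proof. by rewrite scaler_sumr; apply: eq_bigr => i _; rewrite scalerA. Qed.

Lemma sum_delta n (i0 : 'I_n) r (f : 'I_n -> M) :
  \sum_i (if i == i0 then r else 0) *: f i = r *: f i0.
Proof.
rewrite (bigD1 i0) //= eqxx big1 ?addr0 // => i /negbTE ->; by rewrite scale0r.
Qed.

Lemma sum_zero n (f : 'I_n -> M) : \sum_i (0 : R) *: f i = 0.
Proof. by rewrite big1 // => i _; rewrite scale0r. Qed.

Lemma sum_comm n (x : R) (a : 'I_n -> R) (f : 'I_n -> M) :
  \sum_i a i *: (x *: f i) = x *: \sum_i a i *: f i.
Proof. by rewrite scaler_sumr; apply: eq_bigr => i _; rewrite !scalerA mulrC. Qed.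

End Sums.

Section Main2.
Variable R : comUnitRingType.
Variable M : lmodType R.
Variable N : M -> Prop.
Variable x : R.
Hypothesis hloc : local_ring R.
Hypothesis hN : submodule N.
Hypothesis hx : in_m x.
Hypothesis hfull : same_set (colon (mmul N) x) N.

Lemma nth_X0 l (f : 'I_l -> M) (i : 'I_l) : (map f (enum 'I_l))`_i = f i.
Proof. by have := nth_X f [::] i; rewrite cats0. Qed.

Section K.
Variables (l m : nat) (p : 'I_l -> M) (z : 'I_m -> M).
Hypothesis hmin : minimal_gen N ([seq x *: p i | i <- enum 'I_l] ++ [seq z j | j <- enum 'I_m]).

Lemma K3 c d : \sum_i c i *: (x *: p i) + \sum_j d j *: z j = 0 -> forall i, in_m (c i).
Proof.
move=> e i; apply/negP => cu.
have [hg hm] := hmin.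
set X := [seq x *: p i | i <- enum 'I_l] in hg hm.
set Z := [seq z j | j <- enum 'I_m] in hg hm.
have iX : (i < size X)%N by rewrite size_map size_enum_ord.
have iL : (i < size (X ++ Z))%N by rewrite size_cat (leq_trans iX) // leq_addr.
apply: (hm i iL); apply: gen_drop => //.
rewrite nth_X rest_X //.
move: e; rewrite (bigD1 i) //= -addrA => /eqP; rewrite addr_eq0 => /eqP e.
have -> : x *: p i = (c i)^-1 *: (c i *: (x *: p i)).
  by rewrite (scalerA (c i)^-1) mulVr // scale1r.
apply: spanPZ; rewrite e; apply: spanPN; apply: spanPD.
  apply: spanP_catl; apply: spanP_sum => j ji; apply: spanPZ; apply: spanP_mem.
  rewrite -(nth_X0 (fun i => x *: p i) j); apply: nth_rest.
    by rewrite val_eqE.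
  by rewrite size_map size_enum_ord.
apply: spanP_catr; apply: spanP_sum => j _; apply: spanPZ; apply: spanP_mem.
by apply: map_f; rewrite mem_enum.
Qed.

Lemma K3eq a b a' b' :
  \sum_i a i *: (x *: p i) + \sum_j b j *: z j =
  \sum_i a' i *: (x *: p i) + \sum_j b' j *: z j -> forall i, in_m (a i - a' i).
Proof.
move=> e; apply: (K3 (d := fun j => b j - b' j)).
by rewrite sumB_rep sumB_rep addrACA -opprD e subrr.
Qed.

Lemma repN u : N u -> exists a b,
  u = \sum_i a i *: (x *: p i) + \sum_j b j *: z j.
Proof.
move=> nu; have [[_ hg] _] := hmin.
by apply: span_XZ; apply/in_span_spanP; apply: hg.
Qed.

Lemma repN_mem a b : N (\sum_i a i *: (x *: p i) + \sum_j b j *: z j).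
Proof.
have [[hg _] _] := hmin.
apply: hND => //; apply: hNsum => // i _; apply: hNZ => //; apply: hg;
  rewrite mem_cat; apply/orP; [left|right]; apply: map_f; rewrite mem_enum //.
Qed.

Lemma scale_rep r a b : r *: (\sum_i a i *: (x *: p i) + \sum_j b j *: z j) =
  \sum_i (r * a i) *: (x *: p i) + \sum_j (r * b j) *: z j.
Proof. by rewrite scalerDr !sumZ_rep. Qed.

Lemma add_rep a b a' b' :
  (\sum_i a i *: (x *: p i) + \sum_j b j *: z j) +
  (\sum_i a' i *: (x *: p i) + \sum_j b' j *: z j) =
  \sum_i (a i + a' i) *: (x *: p i) + \sum_j (b j + b' j) *: z j.
Proof. by rewrite !sumD_rep addrACA. Qed.

End K.

End Main2.


Section Main3.
Variable R : comUnitRingType.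
Variable M : lmodType R.
Variable N : M -> Prop.
Variable x : R.
Hypothesis hloc : local_ring R.
Hypothesis hN : submodule N.
Hypothesis hx : in_m x.
Hypothesis hfull : same_set (colon (mmul N) x) N.

Lemma inter (X Z : seq M) w : generates N (X ++ Z) ->
  (forall k, (k < size Z)%N -> ~ generates N (X ++ rest Z k)) ->
  spanP X w -> spanP Z w -> mmul N w.
Proof.
move=> hg hirr hX [d ew]; exists Z; split.
  by move=> v vZ; apply: (gen_mem hg); rewrite mem_cat vZ orbT.
exists (fun k => d k); split=> //.
move=> k; apply/negP => du; apply: (hirr k (ltn_ord k)).
rewrite -rest_Z; apply: gen_drop => //.
  by rewrite size_cat ltn_add2l.
rewrite rest_Z nth_cat ltnNge leq_addr /= addKn.
move: ew; rewrite (bigD1 k) //= => ew.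
have -> : Z`_k = (d k)^-1 *: (d k *: Z`_k) by rewrite (scalerA (d k)^-1) mulVr // scale1r.
have -> : d k *: Z`_k = w - \sum_(j < size Z | j != k) d j *: Z`_j.
  by rewrite ew addrK.
apply: spanPZ; apply: spanPB; first exact: spanP_catl.
apply: spanP_catr; exact: (sum_minus (fun j : 'I_(size Z) => d j)).
Qed.

Lemma construct2 l (p : 'I_l -> M) : quot_kbasis N p ->
  (exists g, generates N g) ->
  exists (m : nat) (z : 'I_m -> M),
    minimal_gen N ([seq x *: p i | i <- enum 'I_l] ++ [seq z j | j <- enum 'I_m]).
Proof.
move=> [pc [psp pind]] [g [gN gS]].
set X := [seq x *: p i | i <- enum 'I_l].
have XN : forall w, w \in X -> N w.
  by move=> w /mapP [i _ ->]; apply: pc.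
have P0 : generates N (X ++ g).
  split; first by move=> w; rewrite mem_cat => /orP [/XN|/gN].
  move=> v nv; apply/in_span_spanP; apply: spanP_catr; apply/in_span_spanP; exact: gS.
have [Z [hZ hirr]] := @greedy _ _ (generates N) X g P0.
exists (size Z), (fun j => Z`_j).
have -> : [seq Z`_j | j : 'I_(size Z) <- enum 'I_(size Z)] = Z := map_nth_enum Z.
split=> // k kL; change (~ generates N (rest (X ++ Z) k)).
have sX : size X = l by rewrite size_map size_enum_ord.
case: (ltnP k (size X)) => kX.
  rewrite rest_X // => hg'.
  have kl : (k < l)%N by rewrite -sX.
  pose i := Ordinal kl.
  have xi : spanP (rest X k ++ Z) (x *: p i).
    by apply/in_span_spanP; apply: hg'.2; apply: pc.
  have [w1 [w2 [h1 [h2 e12]]]] := spanP_cat xi.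
  have rX : rest X k = map (fun i => x *: p i) (rest (enum 'I_l) i).
    by rewrite /rest map_cat map_take map_drop.
  rewrite rX in h1; have [c [ew1 c0]] := span_map_supp h1.
  have ci : c i = 0 by apply: c0; apply: notin_rest_enum.
  have ew2 : w2 = x *: (p i - \sum_j c j *: p j).
    by rewrite scalerBr -sum_comm -ew1 e12 addrC addKr.
  have sw2 : spanP X w2.
    rewrite ew2 scalerBr -sum_comm; apply: spanPB.
      by apply: spanP_mem; apply: map_f; rewrite mem_enum.
    apply: spanP_sum => j _; apply: spanPZ; apply: spanP_mem.
    by apply: map_f; rewrite mem_enum.
  have mw2 := inter hZ hirr sw2 h2.
  rewrite ew2 in mw2; have nd := mmul_x hfull mw2.
  have := pind (fun j => (if j == i then 1 else 0) - c j).
  rewrite sumB_rep sum_delta scale1r => /(_ nd i).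
  by rewrite eqxx ci subr0; apply: in_m1.
have -> : k = (size X + (k - size X))%N by rewrite subnKC.
rewrite rest_Z; apply: hirr.
by move: kL; rewrite size_cat ltn_subLR.
Qed.

Definition spanN (L : seq M) v := exists w, spanP L w /\ N (v - w).

Lemma spanN_N L v : N v -> spanN L v.
Proof. by move=> nv; exists 0; split; [apply: spanP0 | rewrite subr0]. Qed.
Lemma spanN_span L v : spanP L v -> spanN L v.
Proof. by move=> sv; exists v; split=> //; rewrite subrr; apply: hN0. Qed.
Lemma spanND L u v : spanN L u -> spanN L v -> spanN L (u + v).
Proof.
move=> [w1 [s1 n1]] [w2 [s2 n2]]; exists (w1 + w2); split; first exact: spanPD.
by rewrite opprD addrACA; apply: hND.
Qed.
Lemma spanNZ L r v : spanN L v -> spanN L (r *: v).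
Proof.
move=> [w [s n]]; exists (r *: w); split; first exact: spanPZ.
by rewrite -scalerBr; apply: hNZ.
Qed.
Lemma spanN_mono L L' v : (forall w, w \in L -> spanN L' w) -> spanN L v -> spanN L' v.
Proof.
move=> h [w [[c ew] n]].
have -> : v = (v - w) + w by rewrite subrK.
apply: spanND; first exact: spanN_N.
rewrite ew; apply: (big_ind (spanN L')).
- by apply: spanN_N; apply: hN0.
- exact: spanND.
- by move=> k _; apply: spanNZ; apply: h; apply: mem_nth.
Qed.

Lemma basis_exists : (exists g, (forall w, w \in g -> colon_m N w) /\
    (forall s, colon_m N s -> spanP g s)) ->
  exists (l : nat) (p : 'I_l -> M), quot_kbasis N p.
Proof.
move=> [g [gC gS]].
pose P (Z : seq M) := (forall w, w \in Z -> colon_m N w) /\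
  (forall s, colon_m N s -> spanN Z s).
have P0 : P ([::] ++ g).
  by split=> // s hs; apply: spanN_span; apply: gS.
have [Z [[hZ1 hZ2] hirr]] := @greedy _ _ P [::] g P0.
exists (size Z), (fun i => Z`_i); split.
  by move=> i; apply: hZ1; apply: mem_nth.
split.
  move=> s hs; have [w [[c ew] n]] := hZ2 s hs.
  by exists (fun i => c i); rewrite -ew.
move=> a ha i; apply/negP => au; apply: (hirr i (ltn_ord i)); split.
  by move=> w /mem_rest; apply: hZ1.
move=> s hs; apply: (spanN_mono (L := Z)); last exact: hZ2.
move=> w wZ.
have iL : (index w Z < size Z)%N by rewrite index_mem.
rewrite -(nth_index 0 wZ); case: (eqVneq (index w Z) i) => [->|ne]; last first.
  by apply: spanN_span; apply: spanP_mem; apply: nth_rest.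
move: ha; rewrite (bigD1 i) //= => ha.
exists (- ((a i)^-1 *: \sum_(j < size Z | j != i) a j *: Z`_j)); split.
  by apply: spanPN; apply: spanPZ; apply: (sum_minus (fun j : 'I_(size Z) => a j)).
rewrite opprK.
have -> : Z`_i = (a i)^-1 *: (a i *: Z`_i) by rewrite (scalerA (a i)^-1) mulVr // scale1r.
by rewrite -scalerDr; apply: hNZ.
Qed.

End Main3.


Section Main4.
Variable R : comUnitRingType.
Variable M : lmodType R.
Variable N : M -> Prop.
Variable x : R.
Hypothesis hloc : local_ring R.
Hypothesis hN : submodule N.
Hypothesis hx : in_m x.
Hypothesis hfull : same_set (colon (mmul N) x) N.
Variables (l m : nat) (p : 'I_l -> M) (z : 'I_m -> M).
Hypothesis hp : quot_kbasis N p.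
Hypothesis hmin : minimal_gen N ([seq x *: p i | i <- enum 'I_l] ++ [seq z j | j <- enum 'I_m]).

Lemma sum_p_N (a : 'I_l -> R) : (forall i, in_m (a i)) -> N (\sum_i a i *: p i).
Proof. by move=> h; apply: hNsum => // i _; apply: hp.1. Qed.

Lemma sum_p_C (a : 'I_l -> R) : colon_m N (\sum_i a i *: p i).
Proof.
by apply: subN_sum; first exact: colon_m_sub; move=> i _; case: (colon_m_sub hN) => _ [_]; apply; apply: hp.1.
Qed.

Lemma phi_exists : exists phi : M -> M,
  (forall u, N u -> colon_m N (phi u)) /\
  (forall (a : 'I_l -> R) (b : 'I_m -> R),
     N (phi (\sum_(i < l) a i *: (x *: p i) + \sum_(j < m) b j *: z j)
        - \sum_(i < l) a i *: p i)) /\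
  (forall r u v, N u -> N v -> N (phi (r *: u + v) - (r *: phi u + phi v))) /\
  (forall u, smul x N u -> N (phi u)) /\
  (forall s, colon_m N s -> N (phi (x *: s) - s)).
Proof.
have rep : forall u, exists a : 'I_l -> R, N u -> exists b : 'I_m -> R,
    u = \sum_i a i *: (x *: p i) + \sum_j b j *: z j.
  move=> u; case: (classic (N u)) => nu.
    by have [a [b e]] := repN hmin nu; exists a => _; exists b.
  by exists (fun _ => 0).
have [A hA] := choice_fun rep.
pose phi u := \sum_i A u i *: p i.
have P2 : forall a b, N (phi (\sum_i a i *: (x *: p i) + \sum_j b j *: z j)
        - \sum_i a i *: p i).
  move=> a b; set u := (X in phi X).
  have nu : N u by apply: (repN_mem hN hmin).
  have [b' e'] := hA u nu.
  have hm : forall i, in_m (A u i - a i) := K3eq hmin (esym e').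
  by rewrite /phi -sumB_rep; apply: sum_p_N => i; apply: hm.
exists phi; split; first by move=> u _; apply: sum_p_C.
split; first exact: P2.
split.
  move=> r u v nu nv; have [bu eu] := hA u nu; have [bv ev] := hA v nv.
  have -> : r *: u + v = \sum_i (r * A u i + A v i) *: (x *: p i) +
                         \sum_j (r * bu j + bv j) *: z j.
    by rewrite {1}eu {1}ev scale_rep add_rep.
  have -> : r *: phi u + phi v = \sum_i (r * A u i + A v i) *: p i.
    by rewrite sumD_rep sumZ_rep.
  exact: P2.
split.
  move=> u [n [nn ->]]; have [b e] := hA n nn.
  have -> : x *: n = \sum_i (x * A n i) *: (x *: p i) + \sum_j (x * b j) *: z j.
    by rewrite {1}e scale_rep.
  have hh := P2 (fun i => x * A n i) (fun j => x * b j).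
  have hs : N (\sum_i (x * A n i) *: p i) by apply: sum_p_N => i; apply: in_mMr.
  by have := hND hN hh hs; rewrite subrK.
move=> s hs; have [a ha] := hp.2.1 s hs.
set n := s - _ in ha; have [b e] := hA n ha.
have es : s = \sum_i a i *: p i + n by rewrite /n addrC subrK.
clearbody n.
have -> : x *: s = \sum_i (x * A n i + a i) *: (x *: p i) + \sum_j (x * b j + 0) *: z j.
  rewrite sumD_rep sumD_rep sum_zero addr0 !sumZ_rep.
  by rewrite {1}es scalerDr [in x *: n]e scalerDr -(sum_comm x a p) addrCA addrA.
have hh := P2 (fun i => x * A n i + a i) (fun j => x * b j + 0).
have eS : \sum_i (x * A n i + a i) *: p i = x *: \sum_i A n i *: p i + \sum_i a i *: p i.
  by rewrite sumD_rep sumZ_rep.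
rewrite eS in hh.
have hxA : N (x *: \sum_i A n i *: p i) by apply: (sum_p_C (A n)).
have := hNB hN (hND hN hh hxA) ha.
congr N; rewrite [in RHS]es.
set P := phi _; set T := x *: _; set Sa := \sum_i a i *: p i.
by rewrite opprD addrA (addrAC (P - T)) subrK opprD addrA.
Qed.

End Main4.


Section Main5.
Variable R : comUnitRingType.
Variable M : lmodType R.
Variable N : M -> Prop.
Variable x : R.
Hypothesis hloc : local_ring R.
Hypothesis hN : submodule N.
Hypothesis hx : in_m x.
Hypothesis hfull : same_set (colon (mmul N) x) N.
Variables (l m : nat) (p : 'I_l -> M) (z : 'I_m -> M).
Hypothesis hp : quot_kbasis N p.
Hypothesis hmin : minimal_gen N ([seq x *: p i | i <- enum 'I_l] ++ [seq z j | j <- enum 'I_m]).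
Variable i0 : 'I_l.

Lemma part5 : exists (e : M) (C : M -> Prop),
     N e /\ (forall r, smul x N (r *: e) <-> in_m r) /\
     submodule C /\ (forall v, smul x N v -> C v) /\ (forall v, C v -> N v) /\
     (forall u, N u -> exists r c, C c /\ u = r *: e + c) /\
     (forall r, C (r *: e) -> smul x N (r *: e)).
Proof.
have [pc [psp pind]] := hp.
pose e := x *: p i0.
pose C u := N u /\ exists a b, u = \sum_i a i *: (x *: p i) + \sum_j b j *: z j /\ in_m (a i0).
have erep : forall r, r *: e = \sum_i (if i == i0 then r else 0) *: (x *: p i) +
                                \sum_j 0 *: z j.
  by move=> r; rewrite sum_delta sum_zero addr0.
have back : forall r, in_m r -> smul x N (r *: e).
  move=> r hr; exists (r *: p i0); split; first exact: pc.
  by rewrite /e !scalerA mulrC.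
have Ne : N e by apply: pc.
exists e, C; split=> //.
split.
  move=> r; split; last exact: back.
  move=> [n [nn en]]; have [a [b ea]] := repN hmin nn.
  move: en; rewrite ea scale_rep erep => /(K3eq hmin) /(_ i0).
  rewrite eqxx => h; apply: (in_mBr hloc h); exact: in_mMr.
split.
  split.
    split; first exact: hN0.
    exists (fun _ => 0), (fun _ => 0); split; last exact: in_m0.
    by rewrite !sum_zero addr0.
  split.
    move=> u v [nu [a [b [eu ha]]]] [nv [a' [b' [ev ha']]]]; split; first exact: hND.
    exists (fun i => a i + a' i), (fun j => b j + b' j); split; last exact: hloc.
    by rewrite eu ev add_rep.
  move=> r v [nv [a [b [ev ha]]]]; split; first exact: hNZ.
  exists (fun i => r * a i), (fun j => r * b j); split; last exact: in_mMl.
  by rewrite ev scale_rep.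
split.
  move=> v [n [nn ->]]; split; first exact: hNZ.
  have [a [b ea]] := repN hmin nn.
  exists (fun i => x * a i), (fun j => x * b j); split; last exact: in_mMr.
  by rewrite ea scale_rep.
split; first by move=> v [].
split.
  move=> u nu; have [a [b ea]] := repN hmin nu.
  exists (a i0), (u - a i0 *: e); split; last by rewrite addrC subrK.
  split; first by apply: hNB => //; apply: hNZ.
  exists (fun i => a i - (if i == i0 then a i0 else 0)), b; split.
    rewrite sumB_rep sum_delta ea /e.
    by rewrite addrAC.
  by rewrite eqxx subrr; apply: in_m0.
move=> r [_ [a [b [ea ha]]]]; apply: back.
move: ea; rewrite erep => /(K3eq hmin) /(_ i0).
by rewrite eqxx => h; apply: (in_mBr hloc h).
Qed.

End Main5.

Unset Implicit Arguments. Set Strict Implicit.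

Theorem proposition2p3 (R : comUnitRingType) (M : lmodType R)
  (N : M -> Prop) (x : R) :
  local_ring R -> noetherian R -> fin_gen M ->
  submodule N -> m_full N -> in_m x -> same_set (colon (mmul N) x) N ->
  (* (1) *)
  same_set (colon N x) (colon_m N) /\
  (forall (l : nat) (p : 'I_l -> M), quot_kbasis N p ->
    (* (2) *)
    (exists (m : nat) (z : 'I_m -> M),
       minimal_gen N ([seq x *: p i | i <- enum 'I_l] ++ [seq z j | j <- enum 'I_m])) /\
    (* (3) *)
    (forall (m : nat) (z : 'I_m -> M),
       minimal_gen N ([seq x *: p i | i <- enum 'I_l] ++ [seq z j | j <- enum 'I_m]) ->
       exists phi : M -> M,
         (forall u, N u -> colon_m N (phi u)) /\
         (forall (a : 'I_l -> R) (b : 'I_m -> R),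
            N (phi (\sum_(i < l) a i *: (x *: p i) + \sum_(j < m) b j *: z j)
               - \sum_(i < l) a i *: p i)) /\
         (forall r u v, N u -> N v ->
            N (phi (r *: u + v) - (r *: phi u + phi v))))) /\
  (* (4) psi : (N :_M m)/N -> N/xN, s + N |-> xs + xN, is a split injection *)
  ((forall s, colon_m N s -> N (x *: s)) /\
   (forall s, N s -> smul x N (x *: s)) /\
   (forall s, colon_m N s -> smul x N (x *: s) -> N s) /\
   (exists rho : M -> M,
      (forall u, N u -> colon_m N (rho u)) /\
      (forall u, smul x N u -> N (rho u)) /\
      (forall r u v, N u -> N v -> N (rho (r *: u + v) - (r *: rho u + rho v))) /\
      (forall s, colon_m N s -> N (rho (x *: s) - s)))) /\
  (* (5) k is a direct summand of N/xN  (when (N :_M m) <> N, see NOTES) *)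
  ((exists s, colon_m N s /\ ~ N s) ->
   exists (e : M) (C : M -> Prop),
     N e /\ (forall r, smul x N (r *: e) <-> in_m r) /\
     submodule C /\ (forall v, smul x N v -> C v) /\ (forall v, C v -> N v) /\
     (forall u, N u -> exists r c, C c /\ u = r *: e + c) /\
     (forall r, C (r *: e) -> smul x N (r *: e))).
Proof.
move=> hloc hR [s hs] hN _ hx hfull.
have sM : forall v, spanP s v by move=> v; apply/in_span_spanP.
have gN : exists g, generates N g.
  have [g [g1 g2]] := noeth_fg hR hN (fun v _ => sM v).
  by exists g; split=> // v nv; apply/in_span_spanP; apply: g2.
have gC : exists g, (forall w, w \in g -> colon_m N w) /\
    (forall s, colon_m N s -> spanP g s).
  exact: (noeth_fg hR (colon_m_sub hN) (fun v _ => sM v)).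
split.
  by move=> v; split; [apply: colon_x | move=> h; apply: h].
split.
  move=> l p hp; split; first exact: construct2.
  move=> m z hmin; have [phi [h1 [h2 [h3 _]]]] := phi_exists hN hx hp hmin.
  by exists phi.
have [l [p hp]] := basis_exists hN gC.
have [m [z hmin]] := construct2 hx hfull hp gN.
split.
  split; first by move=> v h; apply: h.
  split; first by move=> v nv; exists v.
  split.
    move=> v hv [n [nn e]].
    have h0 : N (v - n).
      apply: (mmul_x hfull); rewrite scalerBr e subrr.
      exists [::]; split=> //; exists (fun _ => 0); split; first by move=> i; apply: in_m0.
      by rewrite big_ord0.
    by have := hND hN h0 nn; rewrite subrK.
  have [phi [h1 [_ [h3 [h4 h5]]]]] := phi_exists hN hx hp hmin.
  by exists phi.
move=> [s0 [hs0 ns0]].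
case: (posnP l) => [l0|lpos].
  exfalso; apply: ns0; have [a ha] := hp.2.1 s0 hs0.
  move: ha; rewrite big1 ?subr0 // => i; have := ltn_ord i; rewrite {2}l0.
  by [].
exact: (part5 hloc hN hx hp hmin (Ordinal lpos)).
Qed.
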